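(* Let $s_1,s_2\in\mathcal S$ and let $s,s'\in\mathcal S$ both lie in the plane $\mathrm{Span}\{s_1,s_2\}$. Let $\vec\beta\in T_s\mathcal S$ and $\vec\beta'\in T_{s'}\mathcal S$ (each of $\eta$-norm $<1$) be the unique vectors with $B(s,\vec\beta)s_1=s_2$ and $B(s',\vec\beta')s_1=s_2$. Then $$B(s,\vec\beta)=B(s',\vec\beta')=\mathrm{id}_V+\frac{s_1\otimes s_1+s_2\otimes s_2+s_1\wedge s_2-2\gamma_{12}\,s_2\otimes s_1}{1+\gamma_{12}},$$ where $\gamma_{12}=-\eta(s_1,s_2)$. In particular all boosts linking $s_1$ to $s_2$ whose reference state lies in $\mathrm{Span}\{s_1,s_2\}$ coincide.
   Context: $V$ is a 4-dimensional real vector space with a symmetric non-degenerate bilinear form $\eta$ of signature $(-,+,+,+)$. $\mathcal S$ is one fixed connected component of $\{v\in V:\eta(v,v)=-1\}$. For $s\in\mathcal S$, $T_s\mathcal S:=\{u\in V:\eta(u,s)=0\}$. Endomorphisms are written via $(u\otimes v)(w):=\eta(v,w)u$ and $u\wedge v:=u\otimes v-v\otimes u$. For $s\in\mathcal S$ and $\vec\beta\in T_s\mathcal S$ with $\beta^2:=\eta(\vec\beta,\vec\beta)<1$, $\beta>0$, $\vec n=\vec\beta/\beta$, $\gamma=(1-\beta^2)^{-1/2}$, the boost relative to $s$ is $B(s,\vec\beta)=\mathrm{id}_V+(\gamma-1)(-s\otimes s+\vec n\otimes\vec n)+\beta\gamma(s\otimes\vec n-\vec n\otimes s)$, and $B(s,0)=\mathrm{id}_V$.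 For any $s,s_1,s_2\in\mathcal S$ there is a unique such $\vec\beta\in T_s\mathcal S$ with $B(s,\vec\beta)s_1=s_2$. *)

(* Defs.v *)
From HB Require Import structures.
From mathcomp Require Import all_boot all_order all_algebra.
From mathcomp Require Import reals.
Set Implicit Arguments. Unset Strict Implicit. Unset Printing Implicit Defensive.
Import Order.TTheory GRing.Theory Num.Theory.
Local Open Scope ring_scope.

(* V is modelled as 'rV[R]_4 (every 4-dim real vector space is iso to it);
   the bilinear form is etaM M u v := u M v^T for a Gram matrix M. *)
Section Defs.
Variable R : realType.
Notation V := 'rV[R]_4.

Definition etaM (M : 'M[R]_4) (u v : V) : R := (u *m M *m v^T) 0 0.

(* M symmetric, non-degenerate, of signature (-,+,+,+):
   M = P^T diag(-1,1,1,1) P with P invertible (Sylvester). *)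
Definition minkowski_gram (M : 'M[R]_4) : Prop :=
  M^T = M /\
  exists P : 'M[R]_4, P \in unitmx /\
    M = P^T *m diag_mx (\row_(i < 4) (if i == 0 then -1 else 1)) *m P.

(* The fixed connected component of the unit hyperboloid: the sheet
   containing the future unit timelike vector t0. *)
Definition inS (M : 'M[R]_4) (t0 v : V) : Prop :=
  etaM M v v = -1 /\ etaM M v t0 < 0.

Definition tens (M : 'M[R]_4) (u v : V) : V -> V := fun w => etaM M v w *: u.
Definition wedge (M : 'M[R]_4) (u v : V) : V -> V :=
  fun w => tens M u v w - tens M v u w.

Definition boost (M : 'M[R]_4) (s b : V) : V -> V :=
  if b == 0 then id else
  let beta := Num.sqrt (etaM M b b) in
  let n := beta^-1 *: b in
  let gamma := (Num.sqrt (1 - beta ^+ 2))^-1 in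
  fun w => w + (gamma - 1) *: (- tens M s s w + tens M n n w)
             + (beta * gamma) *: (tens M s n w - tens M n s w).

End Defs.

(* Main.v *)
Require Import Defs.
From HB Require Import structures.
From mathcomp Require Import all_boot all_order all_algebra.
From mathcomp Require Import reals.
From mathcomp Require Import ring lra.
From Stdlib Require Import FunctionalExtensionality.
Import Order.TTheory GRing.Theory Num.Theory.
Local Open Scope ring_scope.
Lemma etaDl (R : realType) (M : 'M[R]_4) (u v w : 'rV[R]_4) : etaM M (u + v) w = etaM M u w + etaM M v w.
Proof. by rewrite /etaM !mulmxDl mxE. Qed.
Lemma etaZl (R : realType) (M : 'M[R]_4) a (u w : 'rV[R]_4) : etaM M (a *: u) w = a * etaM M u w.
Proof. by rewrite /etaM -!scalemxAl mxE. Qed.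
Lemma etaDr (R : realType) (M : 'M[R]_4) (u v w : 'rV[R]_4) : etaM M u (v + w) = etaM M u v + etaM M u w.
Proof. by rewrite /etaM linearD /= mulmxDr mxE. Qed.
Lemma etaZr (R : realType) (M : 'M[R]_4) a (u w : 'rV[R]_4) : etaM M u (a *: w) = a * etaM M u w.
Proof. by rewrite /etaM linearZ /= -scalemxAr mxE. Qed.
Lemma etaC (R : realType) (M : 'M[R]_4) (hM : M^T = M) (u v : 'rV[R]_4) : etaM M u v = etaM M v u.
Proof.
rewrite /etaM -[in LHS](trmxK (u *m M *m v^T)) [in LHS]mxE.
by rewrite !trmx_mul trmxK hM mulmxA.
Qed.
Lemma eta0l (R : realType) (M : 'M[R]_4) (w : 'rV[R]_4) : etaM M 0 w = 0.
Proof. by rewrite -(scale0r 0) etaZl mul0r. Qed.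

Lemma ideal1 (R : realType) (A B c h : R) : h = 0 -> A - B = c * h -> A = B.
Proof. by move=> -> /eqP; rewrite mulr0 subr_eq0 => /eqP. Qed.
Lemma ideal2 (R : realType) (A B c1 h1 c2 h2 : R) : h1 = 0 -> h2 = 0 ->
  A - B = c1 * h1 + c2 * h2 -> A = B.
Proof. by move=> -> -> /eqP; rewrite !mulr0 addr0 subr_eq0 => /eqP. Qed.

Lemma coordE (R : realType) (P : 'M[R]_4) (u v : 'rV[R]_4) :
  etaM (P^T *m diag_mx (\row_(i < 4) (if i == 0 then -1 else 1)) *m P) u v =
  let U := u *m P^T in let W := v *m P^T in
  - (U 0 0 * W 0 0) + U 0 1 * W 0 1 + U 0 2 * W 0 2 + U 0 3 * W 0 3.
Proof.
rewrite /etaM /=.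
have -> : u *m (P^T *m diag_mx (\row_(i < 4) (if i == 0 then -1 else 1)) *m P) *m v^T
  = (u *m P^T) *m diag_mx (\row_(i < 4) (if i == 0 then -1 else 1)) *m (v *m P^T)^T.
  by rewrite trmx_mul trmxK !mulmxA.
set U := u *m P^T; set W := v *m P^T.
rewrite mul_mx_diag mxE.
rewrite !big_ord_recl big_ord0.
rewrite !mxE /=.
rewrite (_ : lift ord0 ord0 = 1 :> 'I_4); last by apply/val_inj.
rewrite (_ : lift ord0 (lift ord0 ord0) = 2 :> 'I_4); last by apply/val_inj.
rewrite (_ : lift ord0 (lift ord0 (lift ord0 ord0)) = 3 :> 'I_4); last by apply/val_inj.
ring.
Qed.

Lemma revCS (R : realType) (u0 u1 u2 u3 v0 v1 v2 v3 : R) :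
  - (u0 * u0) + u1 * u1 + u2 * u2 + u3 * u3 = -1 ->
  - (v0 * v0) + v1 * v1 + v2 * v2 + v3 * v3 = -1 ->
  (- (u0 * v0) + u1 * v1 + u2 * v2 + u3 * v3) * (u0 * v0) < 0.
Proof.
move=> hu hv.
set d := u1 * v1 + u2 * v2 + u3 * v3.
have cs : d ^+ 2 <= (u1*u1+u2*u2+u3*u3) * (v1*v1+v2*v2+v3*v3).
  have e : (u1*u1+u2*u2+u3*u3) * (v1*v1+v2*v2+v3*v3) - d ^+ 2 =
     (u1*v2-u2*v1)^+2 + (u1*v3-u3*v1)^+2 + (u2*v3-u3*v2)^+2 by rewrite /d; ring.
  have : 0 <= (u1*v2-u2*v1)^+2 + (u1*v3-u3*v1)^+2 + (u2*v3-u3*v2)^+2.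
    by rewrite !addr_ge0 // sqr_ge0.
  rewrite -e subr_ge0 //.
have hd : d ^+ 2 < (u0 * v0) ^+ 2.
  have h1 : 1 <= u0 * u0 by nra.
  have h2 : 1 <= v0 * v0 by nra.
  have e1 : u1*u1+u2*u2+u3*u3 = u0 * u0 - 1 by lra.
  have e2 : v1*v1+v2*v2+v3*v3 = v0 * v0 - 1 by lra.
  rewrite e1 e2 in cs. nra.
set t := u0 * v0.
have -> : - (u0 * v0) + u1 * v1 + u2 * v2 + u3 * v3 = - t + d by rewrite /d /t; ring.
have h := sqr_ge0 (d - t).
have e : (d - t) ^+ 2 = d^+2 - 2 * (d * t) + t ^+ 2 by ring.
rewrite e in h.
have -> : (- t + d) * t = d * t - t ^+ 2 by ring.
rewrite -/t in hd. lra.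
Qed.

Lemma sheet (R : realType) (M : 'M[R]_4) (t0 u v : 'rV[R]_4) :
  minkowski_gram M -> inS M t0 t0 -> inS M t0 u -> inS M t0 v -> etaM M u v < 0.
Proof.
case=> _ [P [_ ->]].
set M' := _ *m P.
have key : forall a c : 'rV[R]_4, etaM M' a a = -1 -> etaM M' c c = -1 ->
   etaM M' a c * ((a *m P^T) 0 0 * (c *m P^T) 0 0) < 0.
  move=> a c; rewrite /M' !coordE /=; exact: revCS.
case=> [htt _] [huu hut] [hvv hvt].
have k1 := key _ _ huu htt.
have k2 := key _ _ hvv htt.
have k3 := key _ _ huu hvv.
move: k1 k2 k3 hut hvt.
set U := (u *m P^T) 0 0; set W := (v *m P^T) 0 0; set T := (t0 *m P^T) 0 0.
move=> k1 k2 k3 hut hvt.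
have p1 : 0 < U * T by nra.
have p2 : 0 < W * T by nra.
have p3 : 0 < U * W by nra.
nra.
Qed.
Lemma core (R : realType) (M : 'M[R]_4) (hM : M^T = M) (s n s1 s2 : 'rV[R]_4) (g k x y : R) :
  etaM M s s = -1 -> etaM M n n = 1 -> etaM M s n = 0 ->
  g ^+ 2 - k ^+ 2 = 1 -> 0 < g -> x ^+ 2 - y ^+ 2 = 1 ->
  s1 = x *: s + y *: n -> s2 = (g * x + k * y) *: s + (k * x + g * y) *: n ->
  (fun w => w + (g - 1) *: (- tens M s s w + tens M n n w)
              + k *: (tens M s n w - tens M n s w)) =
  (fun w => w + (1 + - etaM M s1 s2)^-1 *:
      (tens M s1 s1 w + tens M s2 s2 w + wedge M s1 s2 w
       - (2 * - etaM M s1 s2) *: tens M s2 s1 w)).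
Proof.
move=> hss hnn hsn h2 g0 h1 e1 e2.
have hns : etaM M n s = 0 by rewrite etaC.
have hg : - etaM M s1 s2 = g.
  transitivity (g * (x ^+ 2 - y ^+ 2)); last by rewrite h1 mulr1.
  rewrite e1 e2 !etaDl !etaZl !etaDr !etaZr hss hnn hsn hns; ring.
rewrite hg.
apply: functional_extensionality => w.
rewrite /wedge /tens.
rewrite e1 e2 !etaDl !etaZl.
set S := etaM M s w; set N := etaM M n w.
apply/rowP => i; rewrite !mxE.
have g1 : 1 + g != 0 by rewrite gt_eqF // ltr_wpDl.
apply: (@ideal2 R _ _ ((1 + g)^-1 * (-S * s 0 i + g^+2 * S * s 0 i + g * k * S * n 0 i
   - g * k * N * s 0 i - k^+2 * N * n 0 i - k * N * s 0 i + k * S * n 0 i))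
  (x^+2 - y^+2 - 1) ((1 + g)^-1 * (N * n 0 i + x * y * S * n 0 i + x * y * N * s 0 i
   + y^+2 * N * n 0 i + y^+2 * S * s 0 i))
  (g^+2 - k^+2 - 1)).
- by rewrite h1 subrr.
- by rewrite h2 subrr.
field. exact: g1.
Qed.

Lemma boostE (R : realType) (M : 'M[R]_4) (s b n : 'rV[R]_4) (be ga : R) :
  b != 0 -> be = Num.sqrt (etaM M b b) -> n = be^-1 *: b ->
  ga = (Num.sqrt (1 - be ^+ 2))^-1 ->
  boost M s b = fun w => w + (ga - 1) *: (- tens M s s w + tens M n n w)
             + (be * ga) *: (tens M s n w - tens M n s w).
Proof. by move=> hb -> -> ->; rewrite /boost (negbTE hb). Qed.

Lemma one (R : realType) (M : 'M[R]_4) (t0 s1 s2 s b : 'rV[R]_4) :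
  minkowski_gram M -> inS M t0 t0 ->
  inS M t0 s1 -> inS M t0 s2 -> inS M t0 s ->
  (exists a c : R, s = a *: s1 + c *: s2) ->
  etaM M b s = 0 -> etaM M b b < 1 ->
  boost M s b s1 = s2 ->
  boost M s b = (fun w => w + (1 + - etaM M s1 s2)^-1 *:
      (tens M s1 s1 w + tens M s2 s2 w + wedge M s1 s2 w
       - (2 * - etaM M s1 s2) *: tens M s2 s1 w)).
Proof.
move=> hG ht h1S h2S hS [a [c hs]] hbs hbb hB.
have hM : M^T = M by case: hG.
have [hss _] := hS.
have [h11 _] := h1S.
have [h22 _] := h2S.
set be := Num.sqrt (etaM M b b).
have [hb0|hbpos] : be = 0 \/ 0 < be.
  by case: (ltrgt0P be) => [h|h|h]; [right|have := sqrtr_ge0 (etaM M b b); rewrite -/be; lra|left].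
- have bid : boost M s b = id.
    case: (eqVneq b 0) => [->|hb]; first by rewrite /boost eqxx.
    rewrite (@boostE _ _ s b _ _ _ hb erefl erefl erefl) -/be hb0 expr0n /= subr0 sqrtr1 invr1 subrr mul0r.
    by apply: functional_extensionality => w; rewrite !scale0r !addr0.
  rewrite bid /= in hB; rewrite bid -hB.
  apply: functional_extensionality => w.
  rewrite /wedge /tens h11; apply/rowP => i; rewrite !mxE; ring.
have hbpos' : 0 < etaM M b b by rewrite -sqrtr_gt0.
have hb : b != 0.
  by apply/eqP => hb; move: hbpos'; rewrite hb eta0l ltxx.
have hbe2 : be ^+ 2 = etaM M b b by rewrite sqr_sqrtr // ltW.
set n := be^-1 *: b.
have be0 : be != 0 by rewrite gt_eqF.
have hnn : etaM M n n = 1.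
  rewrite /n etaZl etaZr -hbe2; field; exact: be0.
have hsn : etaM M s n = 0 by rewrite /n etaZr etaC // hbs mulr0.
have hns : etaM M n s = 0 by rewrite etaC.
set r := Num.sqrt (1 - be ^+ 2).
have hr0 : 0 < 1 - be ^+ 2 by rewrite subr_gt0 hbe2.
have hr : 0 < r by rewrite sqrtr_gt0.
have hr2 : r ^+ 2 = 1 - be ^+ 2 by rewrite sqr_sqrtr // ltW.
set g := r^-1.
have g0 : 0 < g by rewrite invr_gt0.
set k := be * g.
have hgk : g ^+ 2 - k ^+ 2 = 1.
  have r0 : r != 0 by rewrite gt_eqF.
  transitivity ((1 - be ^+ 2) / r ^+ 2); first by rewrite /k /g; field.
  by rewrite -hr2 divff // expf_neq0.
have bE := @boostE _ _ s b n be g hb erefl erefl erefl.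
rewrite -/k in bE.
clearbody k g r n be.
rewrite bE.
rewrite bE in hB.
set X := etaM M s s1; set Y := etaM M n s1.
set A := - ((g - 1) * X) + k * Y; set Bc := (g - 1) * Y - k * X.
have hs2 : s2 = s1 + (A *: s + Bc *: n).
  rewrite -hB /tens -/X -/Y /A /Bc; apply/rowP => i; rewrite !mxE; ring.
have hs1 : s1 = (- X) *: s + Y *: n.
  have [hac|hac] := eqVneq (a + c) 0.
    exfalso.
    have hsv : s = c *: (A *: s + Bc *: n).
      have ha : a = - c by rewrite -[a](addrK c) hac sub0r.
      rewrite {1}hs hs2 ha; apply/rowP => i; rewrite !mxE; ring.
    have e1 := congr1 (etaM M s) hsv.
    have e2 := congr1 (etaM M n) hsv.
    rewrite etaZr etaDr !etaZr hss hsn in e1.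
    rewrite etaZr etaDr !etaZr hns hnn in e2.
    have cA : c * A = 1 by lra.
    have c0 : c != 0 by apply/eqP => c0; move: cA; rewrite c0 mul0r => /eqP; rewrite eq_sym oner_eq0.
    have hBc : Bc = 0.
      by apply/eqP; move: e2; rewrite mulr0 mulr1 add0r => /esym/eqP; rewrite mulf_eq0 (negbTE c0).
    rewrite hBc scale0r addr0 in hs2.
    have e3 : etaM M s2 s2 = -1 by [].
    rewrite hs2 !etaDl !etaDr !etaZl !etaZr h11 hss (@etaC _ _ hM s1 s) -/X in e3.
    have A0 : A != 0 by apply/eqP => A0; move: cA; rewrite A0 mulr0 => /eqP; rewrite eq_sym oner_eq0.
    have hA : A = 2 * X.
      have : A * (2 * X - A) = 0 by lra.
      by move/eqP; rewrite mulf_eq0 (negbTE A0) /= subr_eq0 => /eqP.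
    have n1 : etaM M s1 s < 0 by apply: (@sheet _ _ _ _ _ hG ht h1S hS).
    have n2 : etaM M s2 s < 0 by apply: (@sheet _ _ _ _ _ hG ht h2S hS).
    rewrite hs2 etaDl etaZl hss (@etaC _ _ hM s1 s) -/X hA in n2.
    rewrite (@etaC _ _ hM s1 s) -/X in n1.
    have e : X + 2 * X * -1 = - X by ring.
    rewrite e oppr_lt0 in n2.
    by rewrite ltNge (ltW n2) in n1.
  have hs1' : s1 = ((a + c)^-1 * (1 - c * A)) *: s + ((a + c)^-1 * (- (c * Bc))) *: n.
    apply/rowP => i; rewrite !mxE.
    move/rowP: hs => /(_ i); rewrite hs2 !mxE => hi.
    apply: (@ideal1 R _ _ (- (a + c)^-1)
      (s 0 i - (a * s1 0 i + c * (s1 0 i + (A * s 0 i + Bc * n 0 i))))).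
      by rewrite -hi subrr.
    field; exact: hac.
  move: hs1'; set al := _ * (1 - c * A); set bt := _ * - (c * Bc) => hs1'.
  have eX : X = - al by rewrite /X {1}hs1' etaDr !etaZr hss hsn; ring.
  have eY : Y = bt by rewrite /Y {1}hs1' etaDr !etaZr hns hnn; ring.
  by rewrite eX eY opprK.
apply: (@core _ _ hM s n s1 s2 g k (- X) Y hss hnn hsn hgk g0).
- have := h11; rewrite {1 2}hs1 etaDl !etaDr !etaZl !etaZr hss hsn hns hnn; lra.
- exact: hs1.
- rewrite hs2 {1}hs1 /A /Bc; apply/rowP => i; rewrite !mxE; ring.
Qed.

Theorem mainTheorem4 (R : realType) (M : 'M[R]_4) (t0 : 'rV[R]_4)
  (s1 s2 s s' b b' : 'rV[R]_4) :
  minkowski_gram M -> inS M t0 t0 ->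
  inS M t0 s1 -> inS M t0 s2 -> inS M t0 s -> inS M t0 s' ->
  (exists a c : R, s = a *: s1 + c *: s2) ->
  (exists a c : R, s' = a *: s1 + c *: s2) ->
  etaM M b s = 0 -> etaM M b b < 1 ->
  etaM M b' s' = 0 -> etaM M b' b' < 1 ->
  boost M s b s1 = s2 -> boost M s' b' s1 = s2 ->
  let g12 := - etaM M s1 s2 in
  let F := fun w => w + (1 + g12)^-1 *:
      (tens M s1 s1 w + tens M s2 s2 w + wedge M s1 s2 w
       - (2 * g12) *: tens M s2 s1 w) in
  boost M s b = F /\ boost M s' b' = F.
Proof.
move=> hG ht h1 h2 hs hs' sp sp' hbs hbb hbs' hbb' hB hB' g12 F.
split.
- exact: (@one _ _ t0 s1 s2 s b hG ht h1 h2 hs sp hbs hbb hB).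
- exact: (@one _ _ t0 s1 s2 s' b' hG ht h1 h2 hs' sp' hbs' hbb' hB').
Qed.
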